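(* Let $(X,d)$ be a compact metric space, $\mathbb{F}=\{f_n:n\in\mathbb{N}\}$ a sequence of continuous surjective self-maps of $X$, $k\in\mathbb{N}$ and $x,y\in X$. If $\mathbb{F}$ is commutative, then: if $(x,y)$ is proximal for $(X,\mathbb{F}_k)$, then $(x,y)$ is proximal for $(X,\mathbb{F})$. Further, if $\mathbb{F}$ is commutative and each $f_i$ is bijective, then: if $(x,y)$ is proximal for $(X,\mathbb{F})$, then $(x,y)$ is proximal for $(X,\mathbb{F}_k)$.
   Context: Write $\omega_n=f_n\circ\cdots\circ f_1$ and, for $n>k$, $\omega^k_n=f_n\circ\cdots\circ f_{k+1}$; $\mathbb{F}_k=\{f_n:n\ge k+1\}$ is the truncated family. $\mathbb{F}$ is commutative if $f_i\circ f_j=f_j\circ f_i$ for all $i,j$. A pair $(x,y)$ is proximal for $(X,\mathbb{F})$ if $\liminf_{n\to\infty}d(\omega_n(x),\omega_n(y))=0$, and proximal for $(X,\mathbb{F}_k)$ if $\liminf_{n\to\infty}d(\omega^k_n(x),\omega^k_n(y))=0$. *)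

(* Defs.v *)
From HB Require Import structures.
From mathcomp Require Import all_boot all_order all_algebra.
From mathcomp Require Import all_classical all_reals all_analysis.
Set Implicit Arguments. Unset Strict Implicit. Unset Printing Implicit Defensive.
Import Order.TTheory GRing.Theory Num.Theory.
Local Open Scope ring_scope.

(* Convention: the family F = {f_1, f_2, ...} is encoded by f : nat -> X -> X
   with f_(n+1) = f n (0-based shift). *)

(* omega_from f k n = f_n o ... o f_(k+1) for n > k, identity for n <= k. *)
Fixpoint omega_from {X : Type} (f : nat -> X -> X) (k n : nat) : X -> X :=
  match n with
  | 0 => id
  | n'.+1 => if (k <= n')%N then f n' \o omega_from f k n' else id
  end.

Definition omega {X : Type} (f : nat -> X -> X) (n : nat) : X -> X :=
  omega_from f 0 n.

Definition commutative_family {X : Type} (f : nat -> X -> X) : Prop :=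
  forall i j, f i \o f j = f j \o f i.

Definition proximal_k {R : realType} {X : metricType R}
  (f : nat -> X -> X) (k : nat) (x y : X) : Prop :=
  limn_einf (fun n => (mdist (omega_from f k n x) (omega_from f k n y))%:E) = 0%E.

Definition proximal {R : realType} {X : metricType R}
  (f : nat -> X -> X) (x y : X) : Prop :=
  limn_einf (fun n => (mdist (omega f n x) (omega f n y))%:E) = 0%E.

(* Main.v *)
Require Import Defs.
From HB Require Import structures.
From mathcomp Require Import all_boot all_order all_algebra.
From mathcomp Require Import all_classical all_reals all_analysis.
From mathcomp Require Import lra.
Import Order.TTheory GRing.Theory Num.Theory.
Import metricType_numDomainType.
Local Open Scope classical_set_scope.
Local Open Scope ring_scope.
Section S1.
Variable (R : realType).
Lemma einf0P (r : nat -> R) : (forall n, 0 <= r n) ->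
  (limn_einf (fun n => (r n)%:E) = 0%E <->
   forall e, 0 < e -> forall N, exists2 n, (N <= n)%N & r n < e).
Proof.
move=> r0.
have E : limn_einf (fun n => (r n)%:E) = ereal_sup (range (einfs (fun n => (r n)%:E)))
  by rewrite limn_einf_lim; apply/cvg_lim => //; exact: cvg_einfs_sup.
have ge0 : forall N, (0 <= einfs (fun n => (r n)%:E) N)%E.
  move=> N; apply: le_ereal_inf_tmp => _ [k _ <-]; by rewrite lee_fin.
rewrite E; split.
- move=> H e e0 N; apply: contrapT => Hn.
  have : (e%:E <= einfs (fun n => (r n)%:E) N)%E.
    apply: le_ereal_inf_tmp => _ [k /= Nk <-]; rewrite lee_fin.
    by rewrite leNgt; apply/negP => rk; apply: Hn; exists k.
  have HN : range (einfs (fun n => (r n)%:E)) (einfs (fun n => (r n)%:E) N) by exists N.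
  move=> /le_trans /(_ (ereal_sup_ubound HN)).
  by rewrite H lee_fin leNgt e0.
- move=> H; apply/eqP; rewrite eq_le; apply/andP; split.
    apply: ge_ereal_sup => _ [N _ <-].
    apply/lee_addgt0Pr => e e0; rewrite add0e.
    have [n Nn rn] := H e e0 N.
    apply: le_trans (ereal_inf_lbound _) _; first by exists n.
    by rewrite lee_fin ltW.
  exact: le_trans (ge0 0%N) (ereal_sup_ubound _).
Qed.
End S1.
Section S.
Variables (R : realType) (X : metricType R).

Lemma dist_near (g : X -> X) (a b : X) (eta : R) : continuous g -> 0 < eta ->
  \forall z \near (a, b),
    mdist (g a) (g b) - eta < mdist (g z.1) (g z.2) /\
    mdist (g z.1) (g z.2) < mdist (g a) (g b) + eta.
Proof.
move=> gc eta0.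
have e2 : 0 < eta / 2 by rewrite divr_gt0.
have Ha := cvgr_dist_lt (gc a) e2.
have Hb := cvgr_dist_lt (gc b) e2.
exists ([set a' | mdist (g a) (g a') < eta / 2], [set b' | mdist (g b) (g b') < eta / 2]).
  by split => /=; [apply: Ha | apply: Hb].
case=> a' b' [/= ha hb].
have t1 := metric_triangle (g a) (g a') (g b).
have t2 := metric_triangle (g a') (g b') (g b).
have t3 := metric_triangle (g a') (g a) (g b').
have t4 := metric_triangle (g a) (g b) (g b').
have s1 := metric_sym (g b') (g b).
have s2 := metric_sym (g a') (g a).
have -> : eta = eta / 2 + eta / 2 by rewrite -splitr.
split; lra.
Qed.

Lemma unif_lem (p q : X -> X) : compact [set: X] -> continuous p -> continuous q ->
  (forall a b, p a = p b -> q a = q b) ->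
  forall e, 0 < e -> exists2 d, 0 < d &
    forall a b, mdist (p a) (p b) < d -> mdist (q a) (q b) < e.
Proof.
move=> cX pc qc pq e e0.
have cXX : compact [set: X * X] by rewrite -setXTT; exact: compact_setX.
move/compact_near_coveringP: cXX.
move=> /(_ R (0:R)^'+ (fun d z => mdist (p z.1) (p z.2) < d -> mdist (q z.1) (q z.2) < e) _) H.
have H2 : forall z : X * X, [set: X * X] z ->
    \forall z' \near z & d \near (0:R)^'+,
    mdist (p z'.1) (p z'.2) < d -> mdist (q z'.1) (q z'.2) < e.
  move=> -[a b] _.
  have [pab|pab] := eqVneq (p a) (p b).
  - have Hn := @dist_near q a b e qc e0.
    exists ([set z | mdist (q a) (q b) - e < mdist (q z.1) (q z.2) /\
                          mdist (q z.1) (q z.2) < mdist (q a) (q b) + e], setT).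
      by split; [exact: Hn | exact: filterT].
    case=> z' d [/= [_ Hz'] _] _.
    by move: Hz'; rewrite (pq _ _ pab) mdistxx add0r.
  - have r0 : 0 < mdist (p a) (p b) by rewrite mdist_gt0.
    have r2 : 0 < mdist (p a) (p b) / 2 by rewrite divr_gt0.
    have Hn := @dist_near p a b _ pc r2.
    exists ([set z | mdist (p a) (p b) - mdist (p a) (p b) / 2 < mdist (p z.1) (p z.2) /\
                          mdist (p z.1) (p z.2) < mdist (p a) (p b) + mdist (p a) (p b) / 2],
            [set d | d < mdist (p a) (p b) / 2]).
      by split; [exact: Hn | exact: (nbhs_right_lt r2)].
    case=> z' d [/= [Hz' _] /= dlt] dz.
    have : mdist (p a) (p b) - mdist (p a) (p b) / 2 < mdist (p a) (p b) / 2 by lra.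
    by rewrite {1}(splitr (mdist (p a) (p b))) addrK ltxx.
have {}H := H H2.
near (0:R)^'+ => d.
exists d; first by near: d; exact: nbhs_right_gt.
move=> a b; exact: (near H d _ (a, b) I).
Unshelve. all: by end_near.
Qed.
End S.

Section Omega.
Variables (X : Type) (f : nat -> X -> X).

Lemma omega_id m n z : (n <= m)%N -> omega_from f m n z = z.
Proof.
case: n => [//|n] /= h.
by have -> : (m <= n)%N = false by apply/negbTE; rewrite -ltnNge; exact: leq_ltn_trans h.
Qed.

Lemma omega_split k n z : (k <= n)%N ->
  omega_from f 0 n z = omega_from f k n (omega_from f 0 k z).
Proof.
elim: n => [|n IH]; first by rewrite leqn0 => /eqP ->.
rewrite leq_eqVlt => /orP [/eqP ->|kn].
  by rewrite [omega_from f n.+1 n.+1 _]omega_id.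
by rewrite ltnS in kn; rewrite /= kn /= IH.
Qed.

Lemma omega_comm (g : X -> X) : (forall j z, g (f j z) = f j (g z)) ->
  forall m n z, g (omega_from f m n z) = omega_from f m n (g z).
Proof.
move=> H m; elim=> [//|n IH] z /=.
by case: ifP => _ //=; rewrite H IH.
Qed.

Lemma omega_swap k n z : commutative_family f -> (k <= n)%N ->
  omega_from f 0 n z = omega_from f 0 k (omega_from f k n z).
Proof.
move=> cf kn; rewrite (omega_split k n z kn).
have H1 : forall j m p w, f j (omega_from f m p w) = omega_from f m p (f j w).
  move=> j; apply: omega_comm => i w.
  by have := cf j i; move/(congr1 (fun h => h w)).
by rewrite (omega_comm _ (fun j w => esym (H1 j k n w))).
Qed.

Lemma omega_inj : (forall n, injective (f n)) -> forall m n, injective (omega_from f m n).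
Proof.
move=> fi m; elim=> [//|n IH] /=.
by case: ifP => _ //; apply: inj_comp.
Qed.
End Omega.

Lemma omega_cont (R : realType) (X : metricType R) (f : nat -> X -> X) :
  (forall n, continuous (f n)) -> forall m n, continuous (omega_from f m n).
Proof.
move=> fc m; elim=> [|n IH] /=; first by move=> z; exact: cvg_id.
case: ifP => _ z; last exact: cvg_id.
by apply: continuous_comp; [exact: IH | exact: fc].
Qed.

Theorem mainTheorem3 (R : realType) (X : metricType R) (f : nat -> X -> X)
  (k : nat) (x y : X) :
  compact [set: X] ->
  (forall n, continuous (f n)) ->
  (forall n (z : X), exists w : X, f n w = z) ->
  (commutative_family f -> proximal_k f k x y -> proximal f x y) /\
  (commutative_family f -> (forall n, bijective (f n)) ->
     proximal f x y -> proximal_k f k x y).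
Proof.
move=> cX fc fs; split.
- move=> cf.
  rewrite /proximal_k /proximal.
  move/(@einf0P R (fun n => mdist (omega_from f k n x) (omega_from f k n y))
          (fun n => mdist_ge0 _ _)) => H.
  apply/(@einf0P R (fun n => mdist (omega f n x) (omega f n y))
          (fun n => mdist_ge0 _ _)) => e e0 N.
  have [d d0 Hd] := @unif_lem R X _ _ cX (fun z => cvg_id) (@omega_cont _ _ f fc 0 k)
     (fun a b (h : a = b) => congr1 _ h) _ e0.
  have [n Nn Hn] := H d d0 (maxn N k).
  exists n; first by apply: leq_trans Nn; exact: leq_maxl.
  have kn : (k <= n)%N by apply: leq_trans Nn; exact: leq_maxr.
  by rewrite /omega !(@omega_swap _ f k n _ cf kn); apply: Hd.
- move=> cf bij.
  rewrite /proximal_k /proximal.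
  move/(@einf0P R (fun n => mdist (omega f n x) (omega f n y))
          (fun n => mdist_ge0 _ _)) => H.
  apply/(@einf0P R (fun n => mdist (omega_from f k n x) (omega_from f k n y))
          (fun n => mdist_ge0 _ _)) => e e0 N.
  have finj : forall n, injective (f n) by move=> n; exact: bij_inj.
  have [d d0 Hd] := @unif_lem R X _ _ cX (@omega_cont _ _ f fc 0 k) (fun z => cvg_id)
     (fun a b h => @omega_inj _ f finj 0 k _ _ h) _ e0.
  have [n Nn Hn] := H d d0 (maxn N k).
  exists n; first by apply: leq_trans Nn; exact: leq_maxl.
  have kn : (k <= n)%N by apply: leq_trans Nn; exact: leq_maxr.
  by apply: Hd; move: Hn; rewrite /omega !(@omega_swap _ f k n _ cf kn).
Qed.
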